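(* Let $\alpha$ be a unit speed Frenet curve in $\mathbb{E}^3$ and $\beta$ an osculating mate of $\alpha$ with binormal $\bar B$. The following are equivalent: (i) the binormal indicatrix $\bar B$ of $\beta$ is a general helix; (ii) $\beta$ is a slant helix; (iii) $\alpha$ is a general helix.
   Context: $\alpha:I\to\mathbb{E}^3$ is parametrized by arclength $s$, with Frenet frame $\{T,N,B\}$, curvature $\kappa>0$, torsion $\tau$. An osculating mate of $\alpha$ is a curve $\beta(s)=\int(x_1T+x_2N)ds$ with smooth $x_1,x_2$, $x_1^2+x_2^2=1$ and $\beta''\perp\mathrm{span}\{T,N\}$; $\beta$ is assumed to be a Frenet curve, unit speed in $s$, with Frenet frame $\{\bar T,\bar N,\bar B\}$. The binormal indicatrix of $\beta$ is the spherical curve $s\mapsto\bar B(s)$. A general helix is a curve whose tangent makes a constant angle with a fixed direction (equivalently torsion/curvature is constant). A slant helix is a curve whose principal normal makes a constant angle with a fixed direction (equivalently $\frac{k^2}{(k^2+t^2)^{3/2}}(t/k)'$ is constant, $k,t$ its curvature and torsion). *)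

(* Defs.v *)
From Stdlib Require Import Reals.
From Coquelicot Require Import Coquelicot.
Open Scope R_scope.

Record vec3 := V3 { vx : R; vy : R; vz : R }.

Definition vadd (u v : vec3) : vec3 := V3 (vx u + vx v) (vy u + vy v) (vz u + vz v).
Definition vscale (c : R) (u : vec3) : vec3 := V3 (c * vx u) (c * vy u) (c * vz u).
Definition vzero : vec3 := V3 0 0 0.
Definition dot (u v : vec3) : R := vx u * vx v + vy u * vy v + vz u * vz v.
Definition cross (u v : vec3) : vec3 :=
  V3 (vy u * vz v - vz u * vy v) (vz u * vx v - vx u * vz v) (vx u * vy v - vy u * vx v).
Definition vnorm (u : vec3) : R := sqrt (dot u u).

Definition has_vderiv (f : R -> vec3) (s : R) (v : vec3) : Prop :=
  is_derive (fun r => vx (f r)) s (vx v) /\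
  is_derive (fun r => vy (f r)) s (vy v) /\
  is_derive (fun r => vz (f r)) s (vz v).

Definition in_I (a b : Rbar) (s : R) : Prop := Rbar_lt a s /\ Rbar_lt s b.

Definition frenet_curve (a b : Rbar) (c : R -> vec3) (T N B : R -> vec3) (k t : R -> R) : Prop :=
  forall s, in_I a b s ->
    has_vderiv c s (T s) /\ vnorm (T s) = 1 /\
    0 < k s /\ has_vderiv T s (vscale (k s) (N s)) /\
    vnorm (N s) = 1 /\ dot (T s) (N s) = 0 /\
    B s = cross (T s) (N s) /\
    has_vderiv N s (vadd (vscale (- k s) (T s)) (vscale (t s) (B s))) /\
    has_vderiv B s (vscale (- t s) (N s)) /\
    continuous k s /\ continuous t s.

Definition osculating_mate (a b : Rbar) (T N : R -> vec3) (x1 x2 : R -> R)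
    (beta : R -> vec3) : Prop :=
  forall s, in_I a b s ->
    ex_derive x1 s /\ ex_derive x2 s /\
    x1 s ^ 2 + x2 s ^ 2 = 1 /\
    has_vderiv beta s (vadd (vscale (x1 s) (T s)) (vscale (x2 s) (N s))) /\
    exists w, has_vderiv (fun r => vadd (vscale (x1 r) (T r)) (vscale (x2 r) (N r))) s w /\
              dot w (T s) = 0 /\ dot w (N s) = 0.

(** General helix: a regular curve whose tangent direction makes a constant
    angle with a fixed direction (unit vector u). *)
Definition general_helix (a b : Rbar) (g : R -> vec3) : Prop :=
  exists (u : vec3) (c : R), vnorm u = 1 /\
    forall s, in_I a b s ->
      exists v, has_vderiv g s v /\ v <> vzero /\ dot v u = c * vnorm v.

Definition slant_helix (a b : Rbar) (g : R -> vec3) : Prop :=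
  exists (T N B : R -> vec3) (k t : R -> R),
    frenet_curve a b g T N B k t /\
    exists (u : vec3) (c : R), vnorm u = 1 /\
      forall s, in_I a b s -> dot (N s) u = c.

(* Main.v *)
Require Import Defs.
From Stdlib Require Import Reals Lra Psatz Classical.
From Coquelicot Require Import Coquelicot.
Open Scope R_scope.


Lemma is_derive_eq (f : R -> R) x l l' : is_derive f x l -> l = l' -> is_derive f x l'.
Proof. intros H <-; exact H. Qed.

Lemma vderiv_unique f s v w : has_vderiv f s v -> has_vderiv f s w -> v = w.
Proof.
  intros [H1 [H2 H3]] [G1 [G2 G3]].
  apply is_derive_unique in H1, H2, H3, G1, G2, G3.
  destruct v, w; simpl in *; f_equal; congruence.
Qed.

Lemma is_derive_Rplus (f g : R -> R) x df dg : is_derive f x df -> is_derive g x dg ->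
  is_derive (fun r => f r + g r) x (df + dg).
Proof. intros H G. exact (is_derive_plus f g x df dg H G). Qed.

Lemma dot_deriv f g s v w : has_vderiv f s v -> has_vderiv g s w ->
  is_derive (fun r => dot (f r) (g r)) s (dot v (g s) + dot (f s) w).
Proof.
  intros [H1 [H2 H3]] [G1 [G2 G3]]. unfold dot.
  eapply is_derive_eq.
  apply is_derive_Rplus. apply is_derive_Rplus.
  apply (Derive.is_derive_mult _ _ _ _ _ H1 G1).
  apply (Derive.is_derive_mult _ _ _ _ _ H2 G2).
  apply (Derive.is_derive_mult _ _ _ _ _ H3 G3).
  simpl. ring.
Qed.

Lemma const_vderiv (u : vec3) s : has_vderiv (fun _ => u) s vzero.
Proof. split; [|split]; simpl; apply (is_derive_const (K:=R_AbsRing) (V:=R_NormedModule)). Qed.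

Lemma dot_deriv_c f s v u : has_vderiv f s v ->
  is_derive (fun r => dot (f r) u) s (dot v u).
Proof.
  intro H. eapply is_derive_eq. apply (dot_deriv f (fun _ => u) s v vzero H (const_vderiv u s)).
  unfold dot; simpl; ring.
Qed.

Lemma in_I_locally a b s : in_I a b s -> locally s (fun r => in_I a b r).
Proof.
  intros H. apply (open_and _ _ (open_Rbar_gt a) (open_Rbar_lt b)). exact H.
Qed.

Lemma const_deriv0 a b (f : R -> R) c s l :
  (forall r, in_I a b r -> f r = c) -> in_I a b s -> is_derive f s l -> l = 0.
Proof.
  intros Hc Hs Hd.
  assert (H0 : is_derive f s 0).
  { apply (is_derive_ext_loc (fun _ => c)).
    apply (filter_imp (fun r => in_I a b r)). intros r Hr; symmetry; auto.
    apply in_I_locally; auto. apply (is_derive_const (K:=R_AbsRing) (V:=R_NormedModule)). }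
  apply is_derive_unique in Hd, H0. congruence.
Qed.

Lemma in_I_between a b x y z : in_I a b x -> in_I a b y -> x <= z <= y -> in_I a b z.
Proof.
  intros [Hx1 Hx2] [Hy1 Hy2] [Hz1 Hz2]. split.
  - apply Rbar_lt_le_trans with x; [auto| simpl; lra].
  - apply Rbar_le_lt_trans with y; [simpl; lra|auto].
Qed.

Lemma deriv0_const a b (f : R -> R) :
  (forall s, in_I a b s -> is_derive f s 0) ->
  forall x y, in_I a b x -> in_I a b y -> f x = f y.
Proof.
  intros Hd x y Hx Hy.
  assert (Hb : forall z, Rmin x y <= z <= Rmax x y -> in_I a b z).
  { intros z Hz. unfold Rmin, Rmax in Hz. destruct (Rle_dec x y).
    apply (in_I_between a b x y z); auto. apply (in_I_between a b y x z); auto; lra. }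
  destruct (MVT_gen f x y (fun _ => 0)) as [c [_ Hc]].
  - intros z Hz. apply Hd, Hb; lra.
  - intros z Hz. apply continuity_pt_filterlim. apply (ex_derive_continuous (K:=R_AbsRing) (V:=R_NormedModule)).
    eexists; apply Hd, Hb; auto.
  - lra.
Qed.

Lemma no_cross a b (g : R -> R) :
  (forall s, in_I a b s -> continuous g s) ->
  (forall s, in_I a b s -> g s <> 0) ->
  forall x y, in_I a b x -> in_I a b y -> g x < 0 -> 0 < g y -> False.
Proof.
  intros Hg Hn x y Hx Hy Gx Gy.
  destruct (Rlt_le_dec x y) as [Hxy|Hxy].
  - destruct (Ranalysis5.IVT_interv g x y) as [z [Hz Hz0]]; auto.
    + intros z Hz. apply continuity_pt_filterlim. apply Hg. apply (in_I_between a b x y z); auto.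
    + apply (Hn z); auto. apply (in_I_between a b x y z); auto.
  - destruct (Rle_lt_or_eq_dec _ _ Hxy) as [Hyx|Hyx]; [|subst; lra].
    destruct (Ranalysis5.IVT_interv (fun r => - g r) y x) as [z [Hz Hz0]]; auto; try lra.
    + intros z Hz. apply continuity_pt_filterlim.
      apply (continuous_opp g). apply Hg. apply (in_I_between a b y x z); auto.
    + apply (Hn z); [apply (in_I_between a b y x z); auto| lra].
Qed.

Lemma const_sign a b (f : R -> R) :
  (forall s, in_I a b s -> continuous f s) ->
  (forall s, in_I a b s -> f s <> 0) ->
  exists sg, (sg = 1 \/ sg = -1) /\ forall s, in_I a b s -> 0 < sg * f s.
Proof.
  intros Hc Hn.
  destruct (classic (forall s, in_I a b s -> 0 < f s)) as [H|H].
  - exists 1. split; auto. intros s Hs. specialize (H s Hs). lra.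
  - apply not_all_ex_not in H. destruct H as [s0 H].
    apply imply_to_and in H. destruct H as [Hs0 H].
    assert (f s0 < 0).
    { specialize (Hn s0 Hs0). destruct (Rtotal_order (f s0) 0) as [?|[?|?]]; tauto. }
    exists (-1). split; auto. intros s Hs.
    specialize (Hn s Hs) as Hns.
    destruct (Rtotal_order (f s) 0) as [Hp|[Hp|Hp]]; try tauto; try lra.
    exfalso. apply (no_cross a b f Hc Hn s0 s Hs0 Hs); auto.
Qed.


Lemma vderiv_ext_loc a b (f g : R -> vec3) s v :
  (forall r, in_I a b r -> f r = g r) -> in_I a b s -> has_vderiv f s v -> has_vderiv g s v.
Proof.
  intros He Hs [H1 [H2 H3]].
  assert (L : forall h : vec3 -> R, locally s (fun r => h (f r) = h (g r))).
  { intro h. apply (filter_imp (fun r => in_I a b r)). intros r Hr; rewrite He; auto.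
    apply in_I_locally; auto. }
  split; [|split]; eapply is_derive_ext_loc; [apply (L vx)| exact H1 | apply (L vy) | exact H2 | apply (L vz) | exact H3].
Qed.

Lemma vscale_deriv (x : R -> R) (V : R -> vec3) s dx dV :
  is_derive x s dx -> has_vderiv V s dV ->
  has_vderiv (fun r => vscale (x r) (V r)) s (vadd (vscale dx (V s)) (vscale (x s) dV)).
Proof.
  intros Hx [H1 [H2 H3]]. split; [|split]; simpl.
  apply (is_derive_eq _ _ _ _ (Derive.is_derive_mult _ _ _ _ _ Hx H1)). simpl. ring.
  apply (is_derive_eq _ _ _ _ (Derive.is_derive_mult _ _ _ _ _ Hx H2)). simpl. ring.
  apply (is_derive_eq _ _ _ _ (Derive.is_derive_mult _ _ _ _ _ Hx H3)). simpl. ring.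
Qed.

Lemma vadd_deriv (U V : R -> vec3) s dU dV :
  has_vderiv U s dU -> has_vderiv V s dV ->
  has_vderiv (fun r => vadd (U r) (V r)) s (vadd dU dV).
Proof.
  intros [H1 [H2 H3]] [G1 [G2 G3]]. split; [|split]; simpl; apply is_derive_Rplus; auto.
Qed.

Lemma unit_dot u : vnorm u = 1 -> dot u u = 1.
Proof.
  unfold vnorm. intro H. assert (0 <= dot u u) by (destruct u; unfold dot; simpl; nra).
  rewrite <- (sqrt_sqrt (dot u u)) by auto. rewrite H; ring.
Qed.

Lemma vnorm_scale_unit c n : dot n n = 1 -> vnorm (vscale c n) = Rabs c.
Proof.
  intro H. unfold vnorm. replace (dot (vscale c n) (vscale c n)) with (Rsqr c).
  apply sqrt_Rsqr_abs. unfold Rsqr. destruct n as [n1 n2 n3]; unfold dot in *; simpl in *.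
  transitivity (c * c * (n1 * n1 + n2 * n2 + n3 * n3)). rewrite H; ring. ring.
Qed.

Lemma nonzero_vec v : dot v v <> 0 -> v <> vzero.
Proof. intros H E; subst; apply H; unfold dot, vzero; simpl; ring. Qed.

Lemma alg_w (t n bb w : vec3) d1 d2 x1 x2 k tau :
  bb = cross t n -> dot t t = 1 -> dot n n = 1 -> dot t n = 0 ->
  w = vadd (vadd (vscale d1 t) (vscale x1 (vscale k n)))
           (vadd (vscale d2 n) (vscale x2 (vadd (vscale (-k) t) (vscale tau bb)))) ->
  dot w t = 0 -> dot w n = 0 -> w = vscale (x2 * tau) bb.
Proof.
  intros Hb Htt Hnn Htn Hw HwT HwN. subst bb.
  set (A := d1 - x2 * k). set (C := x1 * k + d2).
  assert (E : w = vadd (vadd (vscale A t) (vscale C n)) (vscale (x2 * tau) (cross t n))).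
  { subst w A C. destruct t, n; unfold vadd, vscale, cross; simpl; f_equal; ring. }
  assert (EA : dot w t = A * dot t t + C * dot t n).
  { rewrite E. destruct t, n; unfold dot, vadd, vscale, cross; simpl; ring. }
  assert (EC : dot w n = A * dot t n + C * dot n n).
  { rewrite E. destruct t, n; unfold dot, vadd, vscale, cross; simpl; ring. }
  rewrite Htt, Htn in EA. rewrite Htn, Hnn in EC.
  assert (A = 0) by lra. assert (C = 0) by lra.
  rewrite E. rewrite H, H0. destruct t, n; unfold vadd, vscale, cross; simpl; f_equal; ring.
Qed.

Lemma betaN a b alpha beta T N B kappa tau x1 x2 T' N' B' k' t' :
  frenet_curve a b alpha T N B kappa tau -> osculating_mate a b T N x1 x2 beta ->
  frenet_curve a b beta T' N' B' k' t' ->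
  forall s, in_I a b s ->
    T' s = vadd (vscale (x1 s) (T s)) (vscale (x2 s) (N s)) /\
    vscale (k' s) (N' s) = vscale (x2 s * tau s) (B s).
Proof.
  intros HA HO HB.
  assert (HT : forall s, in_I a b s -> T' s = vadd (vscale (x1 s) (T s)) (vscale (x2 s) (N s))).
  { intros s Hs. destruct (HB s Hs) as [H1 _]. destruct (HO s Hs) as [_ [_ [_ [H2 _]]]].
    eapply vderiv_unique; eauto. }
  intros s Hs. split; [auto|].
  destruct (HA s Hs) as [_ [HTu [Hk [HTd [HNu [HTN [HBdef [HNd [HBd _]]]]]]]]].
  destruct (HO s Hs) as [[d1 Hd1] [[d2 Hd2] [_ [_ [w [Hw [HwT HwN]]]]]]].
  destruct (HB s Hs) as [_ [_ [_ [HT'd _]]]].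
  assert (HW := vadd_deriv _ _ s _ _ (vscale_deriv x1 T s _ _ Hd1 HTd) (vscale_deriv x2 N s _ _ Hd2 HNd)).
  assert (E1 := vderiv_unique _ _ _ _ Hw HW).
  assert (HT2 : has_vderiv (fun r => vadd (vscale (x1 r) (T r)) (vscale (x2 r) (N r))) s (vscale (k' s) (N' s))).
  { apply (vderiv_ext_loc a b T'); auto. }
  assert (E2 := vderiv_unique _ _ _ _ Hw HT2). rewrite <- E2.
  apply unit_dot in HTu. apply unit_dot in HNu.
  eapply alg_w; eauto.
Qed.


Lemma alg_zero (t n p q bb : vec3) e k' t' tau x1 x2 :
  bb = cross t n -> p = vadd (vscale x1 t) (vscale x2 n) -> q = vscale e bb ->
  dot (vadd (vscale (-k') p) (vscale t' (cross p q))) bb + dot q (vscale (-tau) n) = 0.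
Proof. intros; subst; destruct t, n; unfold dot, vadd, vscale, cross; simpl; ring. Qed.

Lemma cross_facts (t n : vec3) : dot t t = 1 -> dot n n = 1 -> dot t n = 0 ->
  dot (cross t n) (cross t n) = 1 /\ dot (cross t n) t = 0 /\ dot (cross t n) n = 0.
Proof.
  intros H1 H2 H3. split; [|split]; [| destruct t, n; unfold dot, cross; simpl; ring ..].
  transitivity (dot t t * dot n n - dot t n ^ 2).
  destruct t, n; unfold dot, cross; simpl; ring. rewrite H1, H2, H3; ring.
Qed.

Lemma alpha_pt a b alpha T N B kappa tau s :
  frenet_curve a b alpha T N B kappa tau -> in_I a b s ->
  dot (T s) (T s) = 1 /\ dot (N s) (N s) = 1 /\ dot (T s) (N s) = 0 /\
  dot (B s) (B s) = 1 /\ dot (B s) (T s) = 0 /\ dot (B s) (N s) = 0.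
Proof.
  intros HA Hs. destruct (HA s Hs) as [_ [HTu [Hk [HTd [HNu [HTN [HBdef _]]]]]]].
  apply unit_dot in HTu, HNu. rewrite HBdef.
  destruct (cross_facts _ _ HTu HNu HTN) as [? [? ?]]. tauto.
Qed.

Lemma frameN_pt a b alpha beta T N B kappa tau x1 x2 T' N' B' k' t' :
  frenet_curve a b alpha T N B kappa tau -> osculating_mate a b T N x1 x2 beta ->
  frenet_curve a b beta T' N' B' k' t' ->
  forall s, in_I a b s ->
    tau s <> 0 /\ x2 s <> 0 /\ N' s = vscale (dot (N' s) (B s)) (B s) /\
    (dot (N' s) (B s)) ^ 2 = 1.
Proof.
  intros HA HO HB s Hs.
  destruct (betaN _ _ _ _ _ _ _ _ _ _ _ _ _ _ _ _ HA HO HB s Hs) as [_ E].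
  destruct (alpha_pt _ _ _ _ _ _ _ _ s HA Hs) as [_ [_ [_ [HBB _]]]].
  destruct (HB s Hs) as [_ [_ [Hk [_ [HNu _]]]]]. apply unit_dot in HNu.
  set (e := x2 s * tau s / k' s).
  assert (EN : N' s = vscale e (B s)).
  { unfold e. replace (N' s) with (vscale (/ k' s) (vscale (k' s) (N' s))).
    rewrite E. destruct (B s); unfold vscale; simpl; f_equal; field; lra.
    destruct (N' s); unfold vscale; simpl; f_equal; field; lra. }
  assert (Ee : dot (N' s) (B s) = e).
  { rewrite EN. transitivity (e * dot (B s) (B s)).
    destruct (B s); unfold dot, vscale; simpl; ring. rewrite HBB; ring. }
  assert (Ee2 : e ^ 2 = 1).
  { rewrite <- HNu. rewrite EN. transitivity (e ^ 2 * dot (B s) (B s)).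
    rewrite HBB; ring. destruct (B s); unfold dot, vscale; simpl; ring. }
  rewrite Ee. split; [|split; [|split]]; auto.
  - intro Ht. assert (e = 0) by (unfold e; rewrite Ht; field; lra). nra.
  - intro Ht. assert (e = 0) by (unfold e; rewrite Ht; field; lra). nra.
Qed.

Lemma frameN_const a b alpha beta T N B kappa tau x1 x2 T' N' B' k' t' :
  frenet_curve a b alpha T N B kappa tau -> osculating_mate a b T N x1 x2 beta ->
  frenet_curve a b beta T' N' B' k' t' ->
  forall s1 s2, in_I a b s1 -> in_I a b s2 ->
    dot (N' s1) (B s1) = dot (N' s2) (B s2).
Proof.
  intros HA HO HB. apply deriv0_const. intros s Hs.
  destruct (HA s Hs) as [_ [_ [_ [_ [_ [_ [HBdef [_ [HBd _]]]]]]]]].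
  destruct (HB s Hs) as [_ [_ [_ [_ [_ [_ [HB'def [HN'd _]]]]]]]].
  eapply is_derive_eq. apply (dot_deriv _ _ _ _ _ HN'd HBd).
  destruct (betaN _ _ _ _ _ _ _ _ _ _ _ _ _ _ _ _ HA HO HB s Hs) as [ET _].
  destruct (frameN_pt _ _ _ _ _ _ _ _ _ _ _ _ _ _ _ _ HA HO HB s Hs) as [_ [_ [EN _]]].
  rewrite HB'def. eapply alg_zero; eauto.
Qed.


Lemma dot_scale_l c v u : dot (vscale c v) u = c * dot v u.
Proof. destruct v, u; unfold dot, vscale; simpl; ring. Qed.

Lemma I_nonempty a b : Rbar_lt a b -> exists s0, in_I a b s0.
Proof.
  intro H. unfold in_I. destruct a as [a| |], b as [b| |]; simpl in *; try tauto.
  - exists ((a + b) / 2); lra.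
  - exists (a + 1); lra.
  - exists (b - 1); lra.
  - exists 0; auto.
Qed.

Lemma pick a b (f : R -> R) s0 : in_I a b s0 ->
  (forall s1 s2, in_I a b s1 -> in_I a b s2 -> f s1 = f s2) ->
  exists c, forall s, in_I a b s -> f s = c.
Proof. intros H0 H. exists (f s0). intros s Hs; apply H; auto. Qed.

Lemma Nu_eq a b alpha beta T N B kappa tau x1 x2 T' N' B' k' t' u :
  frenet_curve a b alpha T N B kappa tau -> osculating_mate a b T N x1 x2 beta ->
  frenet_curve a b beta T' N' B' k' t' ->
  forall s, in_I a b s ->
    dot (N' s) u = dot (N' s) (B s) * dot (B s) u /\
    dot (B s) u = dot (N' s) (B s) * dot (N' s) u.
Proof.
  intros HA HO HB s Hs.
  destruct (frameN_pt _ _ _ _ _ _ _ _ _ _ _ _ _ _ _ _ HA HO HB s Hs) as [_ [_ [EN E2]]].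
  set (e := dot (N' s) (B s)) in *.
  assert (X : dot (N' s) u = e * dot (B s) u) by (rewrite EN; apply dot_scale_l).
  split; auto. rewrite X. transitivity (e ^ 2 * dot (B s) u). rewrite E2; ring. ring.
Qed.

Definition Pconst a b (B : R -> vec3) u :=
  forall s1 s2, in_I a b s1 -> in_I a b s2 -> dot (B s1) u = dot (B s2) u.

Lemma L_slant a b alpha beta T N B kappa tau x1 x2 Tb Nb Bb kb tb s0 :
  frenet_curve a b alpha T N B kappa tau -> osculating_mate a b T N x1 x2 beta ->
  frenet_curve a b beta Tb Nb Bb kb tb -> in_I a b s0 ->
  (slant_helix a b beta <-> exists u, vnorm u = 1 /\ Pconst a b B u).
Proof.
  intros HA HO HB H0. split.
  - intros [T' [N' [B' [k' [t' [HB' [u [c [Hu Hc]]]]]]]]].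
    exists u; split; auto. intros s1 s2 H1 H2.
    rewrite (proj2 (Nu_eq _ _ _ _ _ _ _ _ _ _ _ _ _ _ _ _ u HA HO HB' s1 H1)).
    rewrite (proj2 (Nu_eq _ _ _ _ _ _ _ _ _ _ _ _ _ _ _ _ u HA HO HB' s2 H2)).
    rewrite (frameN_const _ _ _ _ _ _ _ _ _ _ _ _ _ _ _ _ HA HO HB' s1 s2 H1 H2).
    rewrite Hc, Hc; auto.
  - intros [u [Hu HP]]. exists Tb, Nb, Bb, kb, tb. split; auto.
    exists u, (dot (Nb s0) (B s0) * dot (B s0) u). split; auto. intros s Hs.
    rewrite (proj1 (Nu_eq _ _ _ _ _ _ _ _ _ _ _ _ _ _ _ _ u HA HO HB s Hs)).
    rewrite (frameN_const _ _ _ _ _ _ _ _ _ _ _ _ _ _ _ _ HA HO HB s s0 Hs H0).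
    rewrite (HP s s0); auto.
Qed.

Lemma L_alpha a b alpha beta T N B kappa tau x1 x2 Tb Nb Bb kb tb s0 :
  frenet_curve a b alpha T N B kappa tau -> osculating_mate a b T N x1 x2 beta ->
  frenet_curve a b beta Tb Nb Bb kb tb -> in_I a b s0 ->
  (general_helix a b alpha <-> exists u, vnorm u = 1 /\ Pconst a b B u).
Proof.
  intros HA HO HB H0. split.
  - intros [u [c [Hu Hc]]]. exists u; split; auto.
    assert (HTc : forall s, in_I a b s -> dot (T s) u = c).
    { intros s Hs. destruct (Hc s Hs) as [v [Hv [_ Hvu]]].
      destruct (HA s Hs) as [HaT [HTu _]].
      rewrite <- (vderiv_unique _ _ _ _ Hv HaT). rewrite Hvu, (vderiv_unique _ _ _ _ Hv HaT), HTu; ring. }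
    assert (HNu : forall s, in_I a b s -> dot (N s) u = 0).
    { intros s Hs. destruct (HA s Hs) as [_ [_ [Hk [HTd _]]]].
      assert (Z := const_deriv0 a b _ c s _ HTc Hs (dot_deriv_c _ _ _ u HTd)).
      simpl in Z; rewrite dot_scale_l in Z. nra. }
    intros s1 s2 H1 H2. apply (deriv0_const a b (fun r => dot (B r) u)); auto. intros s Hs.
    destruct (HA s Hs) as [_ [_ [_ [_ [_ [_ [_ [_ [HBd _]]]]]]]]].
    apply (is_derive_eq _ _ _ _ (dot_deriv_c _ _ _ u HBd)). rewrite dot_scale_l, HNu by auto; simpl; ring.
  - intros [u [Hu HP]].
    destruct (pick a b (fun r => dot (B r) u) s0 H0 HP) as [c0 Hc0].
    assert (HNu : forall s, in_I a b s -> dot (N s) u = 0).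
    { intros s Hs. destruct (HA s Hs) as [_ [_ [_ [_ [_ [_ [_ [_ [HBd _]]]]]]]]].
      assert (Z := const_deriv0 a b _ c0 s _ Hc0 Hs (dot_deriv_c _ _ _ u HBd)).
      simpl in Z; rewrite dot_scale_l in Z.
      destruct (frameN_pt _ _ _ _ _ _ _ _ _ _ _ _ _ _ _ _ HA HO HB s Hs) as [Ht _].
      apply Rmult_integral in Z. destruct Z as [Z|Z]; auto. exfalso; apply Ht; lra. }
    assert (HTc : Pconst a b T u).
    { intros s1 s2 H1 H2. apply (deriv0_const a b (fun r => dot (T r) u)); auto. intros s Hs.
      destruct (HA s Hs) as [_ [_ [_ [HTd _]]]].
      apply (is_derive_eq _ _ _ _ (dot_deriv_c _ _ _ u HTd)). rewrite dot_scale_l, HNu by auto; simpl; ring. }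
    destruct (pick a b (fun r => dot (T r) u) s0 H0 HTc) as [c Hc].
    exists u, c. split; auto. intros s Hs. exists (T s).
    destruct (HA s Hs) as [HaT [HTu _]]. split; auto. split.
    + apply nonzero_vec. rewrite unit_dot by auto. apply R1_neq_R0.
    + rewrite HTu, Hc; auto; ring.
Qed.


Lemma L_Bb a b alpha beta T N B kappa tau x1 x2 Tb Nb Bb kb tb s0 :
  frenet_curve a b alpha T N B kappa tau -> osculating_mate a b T N x1 x2 beta ->
  frenet_curve a b beta Tb Nb Bb kb tb -> in_I a b s0 ->
  (forall s, in_I a b s -> tb s <> 0) ->
  (general_helix a b Bb <-> exists u, vnorm u = 1 /\ Pconst a b B u).
Proof.
  intros HA HO HB H0 Htb. split.
  - intros [u [c [Hu Hc]]]. exists u; split; auto.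
    assert (Hf2 : forall s, in_I a b s -> dot (B s) u * dot (B s) u = c * c).
    { intros s Hs. destruct (Hc s Hs) as [v [Hv [_ Hvu]]].
      destruct (HB s Hs) as [_ [_ [_ [_ [HNu [_ [_ [_ [HBd _]]]]]]]]].
      rewrite <- (vderiv_unique _ _ _ _ HBd Hv) in Hvu.
      apply unit_dot in HNu.
      rewrite vnorm_scale_unit, Rabs_Ropp, dot_scale_l in Hvu by auto.
      destruct (Nu_eq _ _ _ _ _ _ _ _ _ _ _ _ _ _ _ _ u HA HO HB s Hs) as [E1 _].
      destruct (frameN_pt _ _ _ _ _ _ _ _ _ _ _ _ _ _ _ _ HA HO HB s Hs) as [_ [_ [_ Ee]]].
      rewrite E1 in Hvu.
      assert (Ha : Rabs (tb s) ^ 2 = tb s ^ 2) by apply pow2_abs.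
      specialize (Htb s Hs).
      assert (Q : tb s ^ 2 * (dot (B s) u * dot (B s) u - c * c) = 0).
      { transitivity ((- tb s * (dot (Nb s) (B s) * dot (B s) u)) ^ 2 - c ^ 2 * Rabs (tb s) ^ 2 - tb s ^2 * (dot (B s) u)^2 * (dot (Nb s) (B s) ^ 2 - 1)).
        rewrite Ha. ring.
        rewrite Hvu, Ee. ring. }
      apply Rmult_integral in Q. destruct Q as [Q|Q].
      exfalso. apply Htb. nra.
      lra. }
    destruct (Req_dec c 0) as [Hc0|Hc0].
    + intros s1 s2 H1 H2. specialize (Hf2 s1 H1) as F1. specialize (Hf2 s2 H2) as F2.
      subst c. assert (dot (B s1) u = 0) by nra. assert (dot (B s2) u = 0) by nra. lra.
    + intros s1 s2 H1 H2. apply (deriv0_const a b (fun r => dot (B r) u)); auto.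
      intros s Hs. destruct (HA s Hs) as [_ [_ [_ [_ [_ [_ [_ [_ [HBd _]]]]]]]]].
      assert (D := dot_deriv_c _ _ _ u HBd).
      assert (Z := const_deriv0 a b _ (c * c) s _ Hf2 Hs (Derive.is_derive_mult _ _ _ _ _ D D)).
      simpl in Z. specialize (Hf2 s Hs).
      apply (is_derive_eq _ _ _ _ D). simpl.
      assert (dot (B s) u <> 0) by (intro Hz; rewrite Hz in Hf2; apply Hc0; nra).
      set (l := dot (vscale (- tau s) (N s)) u) in *.
      assert (Z' : 2 * dot (B s) u * l = 0) by lra.
      apply Rmult_integral in Z'. destruct Z' as [Z'|Z']; auto.
      apply Rmult_integral in Z'. destruct Z' as [Z'|Z']; [lra|tauto].
  - intros [u [Hu HP]].
    destruct (pick a b (fun r => dot (B r) u) s0 H0 HP) as [c0 Hc0].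
    destruct (pick a b (fun r => dot (Nb r) (B r)) s0 H0
       (frameN_const _ _ _ _ _ _ _ _ _ _ _ _ _ _ _ _ HA HO HB)) as [e0 He0].
    assert (Hcont : forall s, in_I a b s -> continuous tb s).
    { intros s Hs. destruct (HB s Hs) as [_ [_ [_ [_ [_ [_ [_ [_ [_ [_ Hct]]]]]]]]]]. exact Hct. }
    destruct (const_sign a b tb Hcont Htb) as [sg [Hsg Hsgp]].
    exists u, (- (e0 * c0 * sg)). split; auto. intros s Hs.
    destruct (HB s Hs) as [_ [_ [_ [_ [HNu [_ [_ [_ [HBd _]]]]]]]]].
    apply unit_dot in HNu.
    exists (vscale (- tb s) (Nb s)). split; auto. split.
    + apply nonzero_vec. rewrite dot_scale_l.
      replace (dot (Nb s) (vscale (- tb s) (Nb s))) with (- tb s * dot (Nb s) (Nb s))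
        by (destruct (Nb s); unfold dot, vscale; simpl; ring).
      rewrite HNu. specialize (Htb s Hs). intro Hz. apply Htb. nra.
    + rewrite vnorm_scale_unit, Rabs_Ropp, dot_scale_l by auto.
      destruct (Nu_eq _ _ _ _ _ _ _ _ _ _ _ _ _ _ _ _ u HA HO HB s Hs) as [E1 _].
      rewrite E1, Hc0, He0 by auto.
      specialize (Hsgp s Hs).
      destruct Hsg as [-> | ->].
      * rewrite Rabs_pos_eq by lra. ring.
      * rewrite Rabs_left by lra. ring.
Qed.

Theorem theorem16 (a b : Rbar) (alpha beta : R -> vec3)
    (T N B Tb Nb Bb : R -> vec3) (kappa tau kb tb x1 x2 : R -> R) :
  Rbar_lt a b ->
  frenet_curve a b alpha T N B kappa tau ->
  osculating_mate a b T N x1 x2 beta ->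
  frenet_curve a b beta Tb Nb Bb kb tb ->
  (* the binormal indicatrix of beta is a regular curve: Bb' = - tb Nb <> 0 *)
  (forall s, in_I a b s -> tb s <> 0) ->
  (general_helix a b Bb <-> slant_helix a b beta) /\
  (slant_helix a b beta <-> general_helix a b alpha).
Proof.
  intros Hab HA HO HB Htb.
  destruct (I_nonempty a b Hab) as [s0 H0].
  rewrite (L_Bb _ _ _ _ _ _ _ _ _ _ _ _ _ _ _ _ s0 HA HO HB H0 Htb).
  rewrite (L_slant _ _ _ _ _ _ _ _ _ _ _ _ _ _ _ _ s0 HA HO HB H0).
  rewrite (L_alpha _ _ _ _ _ _ _ _ _ _ _ _ _ _ _ _ s0 HA HO HB H0).
  tauto.
Qed.
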